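(* Let $(X,\mathcal{A})$ be a measurable space, $f\in\mathcal{F}^{(X,\mathcal{A})}$, $\oplus:[0,\infty]^2\to[0,\infty]$ a pseudo-addition, and $m\in\mathcal{M}^{(X,\mathcal{A})}$ a monotone measure such that $\mathbf{I}_\oplus(m,\varphi_1(f))$ is finite, where $\varphi_1,\varphi_2:[0,\infty)\to[0,\infty)$ are continuous strictly increasing functions. If $\varphi_1^{-1}(\varphi_1(a)\oplus c)\le\varphi_2^{-1}(\varphi_2(a)\oplus c)$ for all $a\in[0,\infty)$, $c\in[0,\infty]$, then \[ \varphi_1^{-1}\big(\mathbf{I}_\oplus(m,\varphi_1(f))\big)\ \le\ \varphi_2^{-1}\big(\mathbf{I}_\oplus(m,\varphi_2(f))\big). \]
   Context: A monotone measure on $(X,\mathcal{A})$ is $m:\mathcal{A}\to[0,\infty]$ with $m(\emptyset)=0$, $m(X)>0$, and $m(A)\le m(B)$ for $A\subseteq B$; $\mathcal{M}^{(X,\mathcal{A})}$ is the set of these; $\mathcal{F}^{(X,\mathcal{A})}$ is the set of $\mathcal{A}$-measurable $f:X\to[0,\infty]$. A pseudo-addition is a map $\oplus:[0,\infty]^2\to[0,\infty]$ that is continuous, associative, non-decreasing and has $0$ as neutral element. $\mathbf{I}_\oplus(m,f)=\inf\{t\oplus m(\{f>t\}) : t\in(0,\infty]\}$. *)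

(* Defs.v *)
From HB Require Import structures.
From mathcomp Require Import all_boot all_order all_algebra.
From mathcomp Require Import all_classical all_reals all_analysis.
From mathcomp Require Import measurable_realfun.
Set Implicit Arguments. Unset Strict Implicit. Unset Printing Implicit Defensive.
Import Order.TTheory GRing.Theory Num.Theory.
Import numFieldNormedType.Exports.
Local Open Scope classical_set_scope.
Local Open Scope ring_scope.
Local Open Scope ereal_scope.

Section Defs.
Variable R : realType.

Definition monotone_measure d (X : measurableType d) (m : set X -> \bar R) :=
  [/\ m set0 = 0, 0 < m setT,
      (forall A, measurable A -> 0 <= m A) &
      (forall A B, measurable A -> measurable B -> A `<=` B -> m A <= m B)].

Definition pseudo_addition (op : \bar R -> \bar R -> \bar R) :=
  [/\ (forall x y, 0 <= x -> 0 <= y -> 0 <= op x y),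
      {within [set p : \bar R * \bar R | 0 <= p.1 /\ 0 <= p.2],
         continuous (fun p => op p.1 p.2)},
      (forall x y z, 0 <= x -> 0 <= y -> 0 <= z -> op x (op y z) = op (op x y) z),
      (forall x x' y y', 0 <= x -> 0 <= y -> x <= x' -> y <= y' ->
          op x y <= op x' y') &
      (forall x, 0 <= x -> op 0 x = x /\ op x 0 = x)].

Definition Iop d (X : measurableType d) (op : \bar R -> \bar R -> \bar R)
  (m : set X -> \bar R) (f : X -> \bar R) : \bar R :=
  ereal_inf [set op t (m [set x | t < f x]) | t in [set t : \bar R | 0 < t]].

Definition ext_fun (phi : R -> R) (x : \bar R) : \bar R :=
  match x with
  | r%:E => (phi r)%:E
  | +oo => +oo
  | -oo => -oo
  end.

Definition ext_inv (phi : R -> R) (y : \bar R) : \bar R :=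
  match y with
  | r%:E => (xget 0%R [set x : R | (0 <= x)%R /\ phi x = r])%:E
  | +oo => +oo
  | -oo => -oo
  end.

End Defs.

(* Main.v *)
Require Import Defs.
From HB Require Import structures.
From mathcomp Require Import all_boot all_order all_algebra.
From mathcomp Require Import all_classical all_reals all_analysis.
From mathcomp Require Import measurable_realfun.
Import Order.TTheory GRing.Theory Num.Theory.
Import numFieldNormedType.Exports.
Local Open Scope classical_set_scope.
Local Open Scope ring_scope.
Local Open Scope ereal_scope.

Section Aux.
Variable R : realType.
Variable phi : R -> R.
Hypothesis inc : forall x y : R, (0 <= x)%R -> (x < y)%R -> (phi x < phi y)%R.
Hypothesis pos : forall x : R, (0 <= x)%R -> (0 <= phi x)%R.
Hypothesis sur : forall y : R, (0 <= y)%R -> exists2 x : R, (0 <= x)%R & phi x = y.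

Lemma phi_le x y : (0 <= x)%R -> (0 <= y)%R -> (phi x <= phi y)%R = (x <= y)%R.
Proof.
move=> x0 y0; apply/idP/idP => [H|H].
  rewrite leNgt; apply/negP => yx; have := inc y x y0 yx; by rewrite ltNge H.
move: H; rewrite le_eqVlt => /orP[/eqP->//|/(inc x y x0)/ltW//].
Qed.

Lemma inv_spec r : (0 <= r)%R ->
  exists2 x : R, (0 <= x)%R /\ phi x = r & ext_inv phi r%:E = x%:E.
Proof.
move=> r0; rewrite /ext_inv.
have [x x0 px] := sur r r0.
have [] := @xgetPex _ 0%R [set x : R | (0 <= x)%R /\ phi x = r] (ex_intro _ x (conj x0 px)).
by move=> ? ?; eexists; [split; eassumption|].
Qed.

Lemma inv_phi x : (0 <= x)%R -> ext_inv phi (phi x)%:E = x%:E.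
Proof.
move=> x0.
have p0 : (0 <= phi x)%R by exact: pos.
have [z [z0 pz] ->] := inv_spec (phi x) p0.
apply/eqP; rewrite eqe eq_le -(phi_le z x z0 x0) -(phi_le x z x0 z0) pz lexx //.
Qed.

Lemma inv_le_galois y x : 0 <= y -> (0 <= x)%R ->
  (ext_inv phi y <= x%:E) = (y <= (phi x)%:E).
Proof.
case: y => [r| |] // r0 x0.
  have [z [z0 pz] ->] := inv_spec r r0.
  by rewrite !lee_fin -pz phi_le.
Qed.

Lemma le_inv_galois y x : 0 <= y -> (0 <= x)%R ->
  (x%:E <= ext_inv phi y) = ((phi x)%:E <= y).
Proof.
case: y => [r| |] // r0 x0; last by rewrite !leey.
have [z [z0 pz] ->] := inv_spec r r0.
by rewrite !lee_fin -pz phi_le.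
Qed.

Lemma inv_mono y1 y2 : 0 <= y1 -> y1 <= y2 -> ext_inv phi y1 <= ext_inv phi y2.
Proof.
move=> y10 y12; have y20 := le_trans y10 y12.
case: y2 y12 y20 => [r| |] // y12 r0; last by rewrite leey.
have [z [z0 pz] ->] := inv_spec r r0.
by rewrite inv_le_galois // pz.
Qed.

Lemma inv_ge0 y : 0 <= y -> 0 <= ext_inv phi y.
Proof.
case: y => [r| |] // r0.
have [z [z0 pz] ->] := inv_spec r r0; by rewrite lee_fin.
Qed.

End Aux.
Arguments phi_le {R phi}. Arguments inv_spec {R phi}. Arguments inv_phi {R phi}.
Arguments inv_le_galois {R phi}. Arguments le_inv_galois {R phi}. Arguments inv_mono {R phi}.

Lemma seteq_phi {R : realType} {d : measure_display} {X : measurableType d}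
  {f : X -> \bar R} {phi : R -> R} :
  (forall x, 0 <= f x) ->
  (forall x y : R, (0 <= x)%R -> (x < y)%R -> (phi x < phi y)%R) ->
  forall a : R, (0 <= a)%R ->
  [set x | (phi a)%:E < ext_fun phi (f x)] = [set x | a%:E < f x].
Proof.
move=> f0 inc a a0; apply/seteqP; split => x /=;
  case: (f x) (f0 x) => [r| |] //= r0; rewrite ?ltry //;
  move: r0; rewrite lee_fin => r0; rewrite !lte_fin !ltNge phi_le //.
Qed.

Lemma meas_lt {R : realType} {d : measure_display} {X : measurableType d}
  {f : X -> \bar R} (a : R) :
  measurable_fun setT f -> measurable [set x | a%:E < f x].
Proof.
move=> mf.
have := mf measurableT _ (emeasurable_itv `]a%:E, +oo[); rewrite setTI.
suff -> : [set x | a%:E < f x] = f @^-1` [set` `]a%:E, +oo[] by [].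
by apply/seteqP; split => x /=; rewrite in_itv /= andbT.
Qed.

Lemma meas_phi {R : realType} {d : measure_display} {X : measurableType d}
  {f : X -> \bar R} {phi : R -> R} :
  measurable_fun setT f -> (forall x, 0 <= f x) ->
  (forall x y : R, (0 <= x)%R -> (x < y)%R -> (phi x < phi y)%R) ->
  (forall y : R, (0 <= y)%R -> exists2 x : R, (0 <= x)%R & phi x = y) ->
  forall t, 0 < t -> measurable [set x | t < ext_fun phi (f x)].
Proof.
move=> mf f0 inc sur [s| |] //= t0.
  have [a a0 pa] := sur s (ltW t0).
  rewrite -pa seteq_phi //; exact: meas_lt.
suff -> : [set x | +oo < ext_fun phi (f x)] = set0 by [].
by apply/seteqP; split => x //=; rewrite ltNge leey.
Qed.

Lemma Iop_ge0 {R : realType} {d : measure_display} {X : measurableType d}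
  {f : X -> \bar R} {op : \bar R -> \bar R -> \bar R} {m : set X -> \bar R}
  {phi : R -> R} :
  measurable_fun setT f -> (forall x, 0 <= f x) ->
  pseudo_addition op -> monotone_measure m ->
  (forall x y : R, (0 <= x)%R -> (x < y)%R -> (phi x < phi y)%R) ->
  (forall y : R, (0 <= y)%R -> exists2 x : R, (0 <= x)%R & phi x = y) ->
  0 <= Iop op m (fun x => ext_fun phi (f x)).
Proof.
move=> mf f0 [opnn _ _ _ _] [_ _ mnn _] inc sur.
apply/ereal_infP => _ [t t0 <-]; apply: opnn; first exact: ltW.
apply: mnn; exact: meas_phi.
Qed.

Theorem theorem4p3 (R : realType) (d : measure_display) (X : measurableType d)
  (f : X -> \bar R) (op : \bar R -> \bar R -> \bar R) (m : set X -> \bar R)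
  (phi1 phi2 : R -> R) :
  measurable_fun setT f -> (forall x, 0 <= f x) ->
  pseudo_addition op ->
  monotone_measure m ->
  (* phi1, phi2 : [0,oo) -> [0,oo) continuous, strictly increasing, bijective *)
  {within [set x : R | (0 <= x)%R], continuous phi1} ->
  {within [set x : R | (0 <= x)%R], continuous phi2} ->
  (forall x y : R, (0 <= x)%R -> (x < y)%R -> (phi1 x < phi1 y)%R) ->
  (forall x y : R, (0 <= x)%R -> (x < y)%R -> (phi2 x < phi2 y)%R) ->
  (forall x : R, (0 <= x)%R -> (0 <= phi1 x)%R) ->
  (forall x : R, (0 <= x)%R -> (0 <= phi2 x)%R) ->
  (forall y : R, (0 <= y)%R -> exists2 x : R, (0 <= x)%R & phi1 x = y) ->
  (forall y : R, (0 <= y)%R -> exists2 x : R, (0 <= x)%R & phi2 x = y) ->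
  Iop op m (fun x => ext_fun phi1 (f x)) \is a fin_num ->
  (forall (a : R) (c : \bar R), (0 <= a)%R -> 0 <= c ->
     ext_inv phi1 (op (phi1 a)%:E c) <= ext_inv phi2 (op (phi2 a)%:E c)) ->
  ext_inv phi1 (Iop op m (fun x => ext_fun phi1 (f x)))
    <= ext_inv phi2 (Iop op m (fun x => ext_fun phi2 (f x))).
Proof.
move=> mf f0 hop hm _ _ inc1 inc2 pos1 pos2 sur1 sur2 fin H.
have I1nn := Iop_ge0 mf f0 hop hm inc1 sur1.
have I2nn := Iop_ge0 mf f0 hop hm inc2 sur2.
move: hop hm => [opnn _ _ opmono op0] [_ _ mnn _].
move: I1nn fin.
set I1 := Iop op m _; set I2 := Iop op m _ => I1nn fin.
rewrite -(fineK fin) in I1nn *.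
have [L [L0 pL] ->] := inv_spec sur1 (fine I1) I1nn.
rewrite leNgt; apply/negP => HL.
have I2lt : I2 < (phi2 L)%:E.
  rewrite ltNge; apply/negP => H'; move: HL.
  by rewrite ltNge (le_inv_galois inc2 sur2) // H'.
have [_ [t t0 <-] yl] := ereal_inf_lt I2lt.
set c := m _ in yl.
have c0 : 0 <= c by apply: mnn; exact: meas_phi.
move: t t0 @c yl c0 => [s| |] t0 c yl c0; last 1 first.
  by move: t0 => /=; rewrite ltNge leNye.
2:{
  have : op +oo 0 <= op +oo c by apply: opmono.
  by rewrite (op0 _ (leey _)).2 leye_eq => /eqP E; move: yl; rewrite E ltNge leey. }
have [a a0 pa] := sur2 s (ltW t0).
rewrite /c in yl c0; clear c; rewrite -pa in yl c0 t0.
rewrite (seteq_phi f0 inc2 a a0) -(seteq_phi f0 inc1 a a0) in yl c0.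
set c := m _ in yl c0.
have apos : (0 < a)%R.
  rewrite lt_neqAle a0 andbT; apply/negP => /eqP a0E.
  have [z z0 pz] := sur2 0%R (lexx 0%R).
  have := phi_le inc2 0%R z (lexx 0%R) z0; rewrite z0 pz => h.
  by move: t0 => /=; rewrite -a0E lte_fin ltNge h.
have t1 : 0 < (phi1 a)%:E.
  by rewrite lte_fin (le_lt_trans (pos1 _ (lexx 0%R))) // inc1.
have I1le : (fine I1)%:E <= op (phi1 a)%:E c.
  rewrite (fineK fin); apply: ereal_inf_lbound; by exists (phi1 a)%:E.
have opnn1 : 0 <= op (phi1 a)%:E c by apply: opnn => //; exact: ltW.
have opnn2 : 0 <= op (phi2 a)%:E c by apply: opnn => //; rewrite lee_fin pos2.
have := inv_mono inc1 sur1 _ _ I1nn I1le.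
rewrite -pL (inv_phi inc1 pos1 sur1 _ L0).
move=> h1; have h2 := le_trans h1 (H a c a0 c0).
move: yl; rewrite ltNge -(le_inv_galois inc2 sur2) // h2; by [].
Qed.
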